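(* The function $f(n)=\lfloor n/2\rfloor$ (division by two) is not strictly definable.
   Context: We work in the simply typed $\lambda$-calculus (type assignment to untyped $\lambda$-terms) with a single base type $o$, with $\beta\eta$-conversion as equality. For a type $\tau$, $\omega_\tau=(\tau\to\tau)\to\tau\to\tau$. The Church numeral of $n$ is $\rho(n)=\lambda f x.f^{n}x$. A function $f:\mathbb{N}^k\to\mathbb{N}$ is strictly definable if there exist a type $\tau$ and a term $E$ with $\vdash E:\omega_\tau\to\cdots\to\omega_\tau\to\omega_\tau$ ($k$ arguments) such that $E\,\rho(n_1)\cdots\rho(n_k)=_{\beta\eta}\rho(f(n_1,\dots,n_k))$ for all $n_1,\dots,n_k$. *)

(* Defs.v *)
(* simply typed lambda calculus a la Curry (type assignment to
   untyped de Bruijn terms), single base type o, beta-eta conversion. *)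
From Stdlib Require Import List Arith.
Import ListNotations.

Inductive ty : Type :=
| o : ty
| Arr : ty -> ty -> ty.

Inductive term : Type :=
| Var : nat -> term
| App : term -> term -> term
| Lam : term -> term.

Fixpoint lift (d c : nat) (t : term) : term :=
  match t with
  | Var n => if n <? c then Var n else Var (n + d)
  | App a b => App (lift d c a) (lift d c b)
  | Lam a => Lam (lift d (S c) a)
  end.

Fixpoint subst (k : nat) (u : term) (t : term) : term :=
  match t with
  | Var n => if n =? k then lift k 0 u
             else if k <? n then Var (n - 1) else Var n
  | App a b => App (subst k u a) (subst k u b)
  | Lam a => Lam (subst (S k) u a)
  end.

Inductive step : term -> term -> Prop :=
| st_beta : forall t u, step (App (Lam t) u) (subst 0 u t)
| st_eta : forall t, step (Lam (App (lift 1 0 t) (Var 0))) t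
| st_appl : forall a a' b, step a a' -> step (App a b) (App a' b)
| st_appr : forall a b b', step b b' -> step (App a b) (App a b')
| st_lam : forall a a', step a a' -> step (Lam a) (Lam a').

Inductive conv : term -> term -> Prop :=
| cv_step : forall a b, step a b -> conv a b
| cv_refl : forall a, conv a a
| cv_sym : forall a b, conv a b -> conv b a
| cv_trans : forall a b c, conv a b -> conv b c -> conv a c.

Inductive has_type : list ty -> term -> ty -> Prop :=
| ty_var : forall G n A, nth_error G n = Some A -> has_type G (Var n) A
| ty_lam : forall G t A B, has_type (A :: G) t B -> has_type G (Lam t) (Arr A B)
| ty_app : forall G t u A B,
    has_type G t (Arr A B) -> has_type G u A -> has_type G (App t u) B.

Definition omega (tau : ty) : ty := Arr (Arr tau tau) (Arr tau tau).

Definition church (n : nat) : term :=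
  Lam (Lam (Nat.iter n (fun t => App (Var 1) t) (Var 0))).

Fixpoint arrows (k : nat) (tau : ty) : ty :=
  match k with
  | 0 => omega tau
  | S k' => Arr (omega tau) (arrows k' tau)
  end.

Definition apps (E : term) (args : list term) : term :=
  fold_left App args E.

Definition strictly_definable (k : nat) (f : list nat -> nat) : Prop :=
  exists (tau : ty) (E : term),
    has_type [] E (arrows k tau) /\
    forall ns : list nat, length ns = k ->
      conv (apps E (map church ns)) (church (f ns)).

(* Main.v *)
Require Import Defs.
From Stdlib Require Import List Arith Lia.
Import ListNotations.

Ltac bd := repeat match goal with
 | |- context [?a <? ?b] => destruct (Nat.ltb_spec a b)
 | |- context [?a =? ?b] => destruct (Nat.eqb_spec a b)
 end.
Ltac bds := repeat (simpl; bd); simpl; try (f_equal; lia); try lia; try reflexivity.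

Lemma lift_0 : forall t c, lift 0 c t = t.
Proof. induction t; intros; simpl; [bds| f_equal; auto | f_equal; auto]. Qed.

Lemma lift_lift : forall t d d' c c', c <= c' <= c + d ->
  lift d' c' (lift d c t) = lift (d + d') c t.
Proof. induction t; intros; simpl; [bds| f_equal; auto | f_equal; apply IHt; lia]. Qed.

Lemma lift_lift_perm : forall t d d' c c', c' <= c ->
  lift d' c' (lift d c t) = lift d (c + d') (lift d' c' t).
Proof. induction t; intros; simpl; [bds| f_equal; auto | f_equal; rewrite IHt by lia; reflexivity]. Qed.

Lemma lift_subst1 : forall t u d c k, c <= k ->
  lift d c (subst k u t) = subst (k + d) u (lift d c t).
Proof.
  induction t; intros; simpl.
  - bd; simpl; bd; simpl; try (f_equal; lia); try lia.
    all: subst; rewrite lift_lift by lia; reflexivity.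
  - f_equal; auto.
  - f_equal. rewrite IHt by lia. reflexivity.
Qed.

Lemma lift_subst2 : forall t u d c k, k <= c ->
  lift d c (subst k u t) = subst k (lift d (c - k) u) (lift d (S c) t).
Proof.
  induction t; intros; simpl.
  - bd; simpl; bd; simpl; try (f_equal; lia); try lia.
    all: subst; rewrite (lift_lift_perm u d k (c-k) 0) by lia;
      replace (c - k + k) with c by lia; reflexivity.
  - f_equal; auto.
  - f_equal. rewrite IHt by lia. reflexivity.
Qed.

Lemma subst_lift : forall t u d c k, c <= k <= c + d ->
  subst k u (lift (S d) c t) = lift d c t.
Proof. induction t; intros; simpl; [bds| f_equal; auto | f_equal; apply IHt; lia]. Qed.

Lemma subst_subst : forall t u v k j, k <= j ->
  subst j v (subst k u t) = subst k (subst (j - k) v u) (subst (S j) v t).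
Proof.
  induction t; intros; simpl.
  - bd; simpl; bd; simpl; try (f_equal; lia); try lia.
    all: subst; try (rewrite lift_subst1 by lia; f_equal; lia).
    all: rewrite subst_lift by lia; reflexivity.
  - f_equal; auto.
  - f_equal. rewrite IHt by lia. reflexivity.
Qed.

Lemma subst_var0_lift : forall a k, subst k (Var 0) (lift 1 (S k) a) = a.
Proof. induction a; intros; simpl; [bds| f_equal; auto | f_equal; auto]. Qed.
Inductive bstep : term -> term -> Prop :=
| b_beta : forall t u, bstep (App (Lam t) u) (subst 0 u t)
| b_appl : forall a a' b, bstep a a' -> bstep (App a b) (App a' b)
| b_appr : forall a b b', bstep b b' -> bstep (App a b) (App a b')
| b_lam : forall a a', bstep a a' -> bstep (Lam a) (Lam a').

Inductive estep : term -> term -> Prop :=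
| e_eta : forall t, estep (Lam (App (lift 1 0 t) (Var 0))) t
| e_appl : forall a a' b, estep a a' -> estep (App a b) (App a' b)
| e_appr : forall a b b', estep b b' -> estep (App a b) (App a b')
| e_lam : forall a a', estep a a' -> estep (Lam a) (Lam a').

Inductive star (R : term -> term -> Prop) : term -> term -> Prop :=
| s_refl : forall x, star R x x
| s_step : forall x y z, R x y -> star R y z -> star R x z.

Lemma star_one : forall R x y, R x y -> star R x y.
Proof. intros. eapply s_step; eauto. apply s_refl. Qed.

Lemma star_trans : forall R x y z, star R x y -> star R y z -> star R x z.
Proof. intros R x y z H; induction H; intros; auto. eapply s_step; eauto. Qed.

Lemma star_map : forall (R R' : term -> term -> Prop) f,
  (forall x y, R x y -> R' (f x) (f y)) -> forall x y, star R x y -> star R' (f x) (f y).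
Proof. intros R R' f Hf x y H; induction H. apply s_refl. eapply s_step; eauto. Qed.

Lemma star_mono : forall (R R' : term -> term -> Prop),
  (forall x y, R x y -> star R' x y) -> forall x y, star R x y -> star R' x y.
Proof. intros R R' Hf x y H; induction H. apply s_refl. eapply star_trans; eauto. Qed.

Definition diamond (R : term -> term -> Prop) :=
  forall x y1 y2, R x y1 -> R x y2 -> exists z, R y1 z /\ R y2 z.
Definition confluent (R : term -> term -> Prop) :=
  forall x y1 y2, star R x y1 -> star R x y2 -> exists z, star R y1 z /\ star R y2 z.

Lemma diamond_strip : forall R, diamond R -> forall x y1 y2, R x y1 -> star R x y2 ->
  exists z, star R y1 z /\ R y2 z.
Proof.
  intros R HD x y1 y2 H1 H2. revert y1 H1. induction H2 as [|x y z H H2 IHstar]; intros y1 H1.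
  - exists y1. split; auto. apply s_refl.
  - destruct (HD _ _ _ H1 H) as [w [Hw1 Hw2]].
    destruct (IHstar _ Hw2) as [v [Hv1 Hv2]].
    exists v. split; auto. eapply s_step; eauto.
Qed.

Lemma diamond_confluent : forall R, diamond R -> confluent R.
Proof.
  intros R HD x y1 y2 H1. revert y2. induction H1 as [|x y z H H1 IHstar]; intros y2 H2.
  - exists y2. split; auto. apply s_refl.
  - destruct (diamond_strip R HD _ _ _ H H2) as [w [Hw1 Hw2]].
    destruct (IHstar _ Hw1) as [v [Hv1 Hv2]].
    exists v. split; auto. eapply s_step; eauto.
Qed.

Lemma lift_var_inv : forall d c t n, lift d c t = Var n ->
  exists m, t = Var m /\ n = (if m <? c then m else m + d).
Proof. intros d c t n H; destruct t; simpl in H; try discriminate.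
  exists n0; split; auto. destruct (n0 <? c); congruence. Qed.
Lemma lift_app_inv : forall d c t a b, lift d c t = App a b ->
  exists a0 b0, t = App a0 b0 /\ a = lift d c a0 /\ b = lift d c b0.
Proof. intros d c t a b H; destruct t; simpl in H; try discriminate.
  - destruct (n <? c); discriminate.
  - injection H; intros; subst; eauto. Qed.
Lemma lift_lam_inv : forall d c t a, lift d c t = Lam a ->
  exists a0, t = Lam a0 /\ a = lift d (S c) a0.
Proof. intros d c t a H; destruct t; simpl in H; try discriminate.
  - destruct (n <? c); discriminate.
  - injection H; intros; subst; eauto. Qed.

Lemma lift_inj : forall t t' d c, lift d c t = lift d c t' -> t = t'.
Proof.
  induction t; intros t' d c H; destruct t'; simpl in H; try discriminate;
  repeat match goal with H : context [?a <? ?b] |- _ => destruct (Nat.ltb_spec a b) end;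
  try discriminate; try (injection H; intros; f_equal; lia);
  try (injection H; intros; f_equal; eauto).
Qed.

Lemma lift_image : forall x y d c k, lift d (S (c + k)) x = lift 1 k y ->
  exists z, x = lift 1 k z /\ y = lift d (c + k) z.
Proof.
  induction x; intros y d c k H.
  - destruct y; simpl in H;
    repeat match goal with H : context [?a <? ?b] |- _ => destruct (Nat.ltb_spec a b) end;
    try discriminate; injection H; intros; subst.
    + exists (Var n0); simpl; split; bds.
    + exists (Var n0); simpl; split; bds.
    + lia.
    + exists (Var (n - 1)); simpl; split; bds.
  - destruct y; simpl in H; try discriminate.
    + destruct (n <? k); discriminate.
    + injection H as H1 H2.
      destruct (IHx1 _ _ _ _ H1) as [z1 [? ?]]. destruct (IHx2 _ _ _ _ H2) as [z2 [? ?]].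
      exists (App z1 z2); subst; simpl; auto.
  - destruct y; simpl in H; try discriminate.
    + destruct (n <? k); discriminate.
    + injection H as H1.
      replace (S (S (c + k))) with (S (c + S k)) in H1 by lia.
      destruct (IHx _ _ _ _ H1) as [z [? ?]].
      exists (Lam z); subst; simpl. split; auto. f_equal. f_equal. lia.
Qed.

Lemma bstep_lift_inv : forall M N, bstep M N -> forall d c t, M = lift d c t ->
  exists t', N = lift d c t' /\ bstep t t'.
Proof.
  induction 1; intros d c t0 HM; symmetry in HM.
  - destruct (lift_app_inv _ _ _ _ _ HM) as [a0 [b0 [? [Ha ?]]]]; subst.
    symmetry in Ha. destruct (lift_lam_inv _ _ _ _ Ha) as [a1 [? ?]]; subst.
    exists (subst 0 b0 a1). split; [|constructor].
    rewrite lift_subst2 by lia. rewrite Nat.sub_0_r. reflexivity.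
  - destruct (lift_app_inv _ _ _ _ _ HM) as [a0 [b0 [? [? ?]]]]; subst.
    destruct (IHbstep d c a0 eq_refl) as [t' [? ?]]; subst.
    exists (App t' b0); split; [reflexivity| constructor; auto].
  - destruct (lift_app_inv _ _ _ _ _ HM) as [a0 [b0 [? [? ?]]]]; subst.
    destruct (IHbstep d c b0 eq_refl) as [t' [? ?]]; subst.
    exists (App a0 t'); split; [reflexivity| constructor; auto].
  - destruct (lift_lam_inv _ _ _ _ HM) as [a0 [? ?]]; subst.
    destruct (IHbstep d (S c) a0 eq_refl) as [t' [? ?]]; subst.
    exists (Lam t'); split; [reflexivity| constructor; auto].
Qed.

Lemma estep_lift_inv : forall M N, estep M N -> forall d c t, M = lift d c t ->
  exists t', N = lift d c t' /\ estep t t'.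
Proof.
  induction 1; intros d c t0 HM; symmetry in HM.
  - destruct (lift_lam_inv _ _ _ _ HM) as [a0 [? Ha]]; subst.
    symmetry in Ha. destruct (lift_app_inv _ _ _ _ _ Ha) as [a1 [b1 [? [Ha1 Hb1]]]]; subst.
    symmetry in Hb1. destruct (lift_var_inv _ _ _ _ Hb1) as [m [? Hm]]; subst.
    destruct (Nat.ltb_spec m (S c)); [|lia]. subst.
    replace (S c) with (S (c + 0)) in Ha1 by lia. symmetry in Ha1.
    destruct (lift_image _ _ _ _ _ Ha1) as [z [? ?]]; subst.
    exists z. split; [f_equal; lia| constructor].
  - destruct (lift_app_inv _ _ _ _ _ HM) as [a0 [b0 [? [? ?]]]]; subst.
    destruct (IHestep d c a0 eq_refl) as [t' [? ?]]; subst.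
    exists (App t' b0); split; [reflexivity| constructor; auto].
  - destruct (lift_app_inv _ _ _ _ _ HM) as [a0 [b0 [? [? ?]]]]; subst.
    destruct (IHestep d c b0 eq_refl) as [t' [? ?]]; subst.
    exists (App a0 t'); split; [reflexivity| constructor; auto].
  - destruct (lift_lam_inv _ _ _ _ HM) as [a0 [? ?]]; subst.
    destruct (IHestep d (S c) a0 eq_refl) as [t' [? ?]]; subst.
    exists (Lam t'); split; [reflexivity| constructor; auto].
Qed.

Lemma bstep_lift : forall t t', bstep t t' -> forall d c, bstep (lift d c t) (lift d c t').
Proof.
  induction 1; intros; simpl; try (constructor; auto).
  rewrite lift_subst2 by lia. rewrite Nat.sub_0_r. constructor.
Qed.

Lemma estep_lift : forall t t', estep t t' -> forall d c, estep (lift d c t) (lift d c t').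
Proof.
  induction 1; intros; simpl; try (constructor; auto).
  replace (lift d (S c) (lift 1 0 t)) with (lift 1 0 (lift d c t)).
  - constructor.
  - rewrite lift_lift_perm by lia. f_equal. lia.
Qed.

Lemma bstep_subst : forall t t', bstep t t' -> forall k u, bstep (subst k u t) (subst k u t').
Proof.
  induction 1; intros; simpl; try (constructor; auto).
  rewrite subst_subst by lia. rewrite Nat.sub_0_r. constructor.
Qed.

Lemma estep_subst : forall t t', estep t t' -> forall k u, estep (subst k u t) (subst k u t').
Proof.
  induction 1; intros; simpl; try (constructor; auto).
  replace (subst (S k) u (lift 1 0 t)) with (lift 1 0 (subst k u t)).
  - constructor.
  - rewrite lift_subst1 by lia. f_equal. lia.
Qed.

Lemma estep_subst_arg : forall t k u u', estep u u' -> star estep (subst k u t) (subst k u' t).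
Proof.
  induction t; intros; simpl.
  - destruct (n =? k). apply star_one. apply estep_lift; auto.
    apply s_refl.
  - eapply star_trans.
    + apply (star_map estep estep (fun x => App x (subst k u t2))); [intros; constructor; auto|]. eauto.
    + apply (star_map estep estep (fun x => App (subst k u' t1) x)); [intros; constructor; auto|]. eauto.
  - apply (star_map estep estep Lam); [intros; constructor; auto|]. eauto.
Qed.
Inductive par : term -> term -> Prop :=
| p_var : forall n, par (Var n) (Var n)
| p_app : forall a a' b b', par a a' -> par b b' -> par (App a b) (App a' b')
| p_lam : forall a a', par a a' -> par (Lam a) (Lam a')
| p_beta : forall a a' b b', par a a' -> par b b' -> par (App (Lam a) b) (subst 0 b' a').

Lemma par_refl : forall t, par t t.
Proof. induction t; constructor; auto. Qed.

Lemma par_lift : forall t t', par t t' -> forall d c, par (lift d c t) (lift d c t').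
Proof.
  induction 1; intros; simpl; try (constructor; auto).
  - apply par_refl.
  - rewrite lift_subst2 by lia. rewrite Nat.sub_0_r. constructor; auto.
Qed.

Lemma par_subst : forall t t', par t t' -> forall u u' k, par u u' -> par (subst k u t) (subst k u' t').
Proof.
  induction 1; intros; simpl; try (constructor; auto).
  - destruct (n =? k). apply par_lift; auto. destruct (k <? n); apply par_refl.
  - rewrite (subst_subst a' b' u' 0 k) by lia. rewrite Nat.sub_0_r. constructor; auto.
Qed.

Lemma par_lam_inv : forall a x, par (Lam a) x -> exists a', x = Lam a' /\ par a a'.
Proof. intros a x H; inversion H; subst; eauto. Qed.

Lemma par_app_inv : forall a b x, par (App a b) x ->
  (exists a' b', x = App a' b' /\ par a a' /\ par b b') \/
  (exists a0 a0' b', a = Lam a0 /\ x = subst 0 b' a0' /\ par a0 a0' /\ par b b').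
Proof. intros a b x H; inversion H; subst; [left|right]; eauto 10. Qed.
Lemma par_var_inv : forall n x, par (Var n) x -> x = Var n.
Proof. intros n x H; inversion H; auto. Qed.

Lemma par_diamond : diamond par.
Proof.
  intros x y1 y2 H1. revert y2. induction H1; intros y2 H2.
  - apply par_var_inv in H2; subst. exists (Var n); split; constructor.
  - apply par_app_inv in H2. destruct H2 as [[a2 [b2 [? [Ha2 Hb2]]]]|[a0 [a2 [b2 [? [? [Ha2 Hb2]]]]]]]; subst.
    + destruct (IHpar1 _ Ha2) as [qa [? ?]]. destruct (IHpar2 _ Hb2) as [qb [? ?]].
      exists (App qa qb); split; constructor; auto.
    + destruct (par_lam_inv _ _ H1_) as [a1 [? Ha1]]; subst.
      destruct (IHpar1 (Lam a2) (p_lam _ _ Ha2)) as [qa [Hq1 Hq2]].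
      destruct (par_lam_inv _ _ Hq1) as [qa' [? ?]]; subst.
      destruct (par_lam_inv _ _ Hq2) as [qa'' [E ?]]. injection E as E; subst.
      destruct (IHpar2 _ Hb2) as [qb [? ?]].
      exists (subst 0 qb qa''); split. constructor; auto. apply par_subst; auto.
  - destruct (par_lam_inv _ _ H2) as [a2 [? Ha2]]; subst. destruct (IHpar _ Ha2) as [q [? ?]].
    exists (Lam q); split; constructor; auto.
  - apply par_app_inv in H2. destruct H2 as [[a2 [b2 [? [Ha2 Hb2]]]]|[a0 [a2 [b2 [E [? [Ha2 Hb2]]]]]]]; subst.
    + destruct (par_lam_inv _ _ Ha2) as [a3 [? Ha3]]; subst.
      destruct (IHpar1 _ Ha3) as [qa [? ?]]. destruct (IHpar2 _ Hb2) as [qb [? ?]].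
      exists (subst 0 qb qa); split. apply par_subst; auto. constructor; auto.
    + injection E as E; subst.
      destruct (IHpar1 _ Ha2) as [qa [? ?]]. destruct (IHpar2 _ Hb2) as [qb [? ?]].
      exists (subst 0 qb qa); split; apply par_subst; auto.
Qed.

Lemma bstep_par : forall x y, bstep x y -> par x y.
Proof. induction 1; constructor; auto using par_refl. Qed.

Lemma par_bsteps : forall x y, par x y -> star bstep x y.
Proof.
  induction 1.
  - apply s_refl.
  - eapply star_trans.
    + apply (star_map bstep bstep (fun x => App x b)); [intros; constructor; auto|]. eauto.
    + apply (star_map bstep bstep (fun x => App a' x)); [intros; constructor; auto|]. eauto.
  - apply (star_map bstep bstep Lam); [intros; constructor; auto|]. eauto.
  - eapply star_trans.
    + apply (star_map bstep bstep (fun x => App (Lam x) b)); [intros; do 2 constructor; auto|]. eauto.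
    + eapply star_trans.
      * apply (star_map bstep bstep (fun x => App (Lam a') x)); [intros; constructor; auto|]. eauto.
      * apply star_one. constructor.
Qed.

Lemma bstep_confluent : confluent bstep.
Proof.
  intros x y1 y2 H1 H2.
  assert (C := diamond_confluent par par_diamond).
  destruct (C x y1 y2) as [z [? ?]].
  - eapply star_mono; [|eauto]. intros; apply star_one, bstep_par; auto.
  - eapply star_mono; [|eauto]. intros; apply star_one, bstep_par; auto.
  - exists z; split; apply (star_mono par bstep par_bsteps); auto.
Qed.

Lemma estep_app_inv : forall a b x, estep (App a b) x ->
  (exists a', x = App a' b /\ estep a a') \/ (exists b', x = App a b' /\ estep b b').
Proof. intros a b x H; inversion H; subst; eauto. Qed.
Lemma estep_lam_inv : forall a x, estep (Lam a) x ->
  (exists t, a = App (lift 1 0 t) (Var 0) /\ x = t) \/ (exists a', x = Lam a' /\ estep a a').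
Proof. intros a x H; inversion H; subst; eauto. Qed.
Lemma estep_var_inv : forall n x, estep (Var n) x -> False.
Proof. intros n x H; inversion H. Qed.
Lemma bstep_app_inv : forall a b x, bstep (App a b) x ->
  (exists a0, a = Lam a0 /\ x = subst 0 b a0) \/
  (exists a', x = App a' b /\ bstep a a') \/ (exists b', x = App a b' /\ bstep b b').
Proof. intros a b x H; inversion H; subst; eauto. Qed.
Lemma bstep_var_inv : forall n x, bstep (Var n) x -> False.
Proof. intros n x H; inversion H. Qed.

Definition erefl_ x y := x = y \/ estep x y.

Lemma estep_eta_body : forall t a', estep (App (lift 1 0 t) (Var 0)) a' ->
  exists t', a' = App (lift 1 0 t') (Var 0) /\ estep t t'.
Proof.
  intros t a' H. apply estep_app_inv in H.
  destruct H as [[x [? Hx]]|[x [? Hx]]]; subst.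
  - destruct (estep_lift_inv _ _ Hx 1 0 t eq_refl) as [t' [? ?]]; subst. eauto.
  - apply estep_var_inv in Hx; contradiction.
Qed.

Lemma erefl_diamond : diamond erefl_.
Proof.
  assert (D : forall x y1 y2, estep x y1 -> estep x y2 -> exists z, erefl_ y1 z /\ erefl_ y2 z).
  { intros x y1 y2 H1. revert y2. induction H1; intros y2 H2.
    - apply estep_lam_inv in H2. destruct H2 as [[t1 [E ?]]|[a' [? Ha]]]; subst.
      + injection E as E. apply lift_inj in E; subst. exists t1; split; left; auto.
      + destruct (estep_eta_body _ _ Ha) as [t' [? ?]]; subst.
        exists t'; split; right; auto. constructor.
    - apply estep_app_inv in H2. destruct H2 as [[x [? Hx]]|[x [? Hx]]]; subst.
      + destruct (IHestep _ Hx) as [q [Hq1 Hq2]].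
        exists (App q b); split; [destruct Hq1 | destruct Hq2]; subst;
          try (left; reflexivity); right; constructor; auto.
      + exists (App a' x); split; right; constructor; auto.
    - apply estep_app_inv in H2. destruct H2 as [[x [? Hx]]|[x [? Hx]]]; subst.
      + exists (App x b'); split; right; constructor; auto.
      + destruct (IHestep _ Hx) as [q [Hq1 Hq2]].
        exists (App a q); split; [destruct Hq1 | destruct Hq2]; subst;
          try (left; reflexivity); right; constructor; auto.
    - apply estep_lam_inv in H2. destruct H2 as [[t1 [E ?]]|[x [? Hx]]]; subst.
      + destruct (estep_eta_body _ _ H1) as [t' [? ?]]; subst.
        exists t'; split; right; auto. constructor.
      + destruct (IHestep _ Hx) as [q [Hq1 Hq2]].
        exists (Lam q); split; [destruct Hq1 | destruct Hq2]; subst;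
          try (left; reflexivity); right; constructor; auto. }
  intros x y1 y2 [H1|H1] [H2|H2]; subst.
  - exists y2; split; left; auto.
  - exists y2; split; [right; auto | left; auto].
  - exists y1; split; [left; auto | right; auto].
  - eauto.
Qed.

Lemma estep_confluent : confluent estep.
Proof.
  intros x y1 y2 H1 H2.
  assert (C := diamond_confluent erefl_ erefl_diamond).
  assert (E1 : forall a b, star estep a b -> star erefl_ a b).
  { apply star_mono. intros; apply star_one; right; auto. }
  assert (E2 : forall a b, star erefl_ a b -> star estep a b).
  { apply star_mono. intros a b [H|H]. subst; apply s_refl. apply star_one; auto. }
  destruct (C x y1 y2 (E1 _ _ H1) (E1 _ _ H2)) as [z [? ?]].
  exists z; split; apply E2; auto.
Qed.

Definition brefl_ x y := x = y \/ bstep x y.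

Lemma bstep_eta_body : forall t a', bstep (App (lift 1 0 t) (Var 0)) a' ->
  (exists t', a' = App (lift 1 0 t') (Var 0) /\ bstep t t') \/
  (exists a0, t = Lam a0 /\ a' = a0).
Proof.
  intros t a' H. apply bstep_app_inv in H.
  destruct H as [[a0 [H1 ?]]|[[x [? Hx]]|[x [? Hx]]]]; subst.
  - right. destruct (lift_lam_inv _ _ _ _ H1) as [a1 [? ?]]; subst.
    exists a1; split; auto. apply subst_var0_lift.
  - destruct (bstep_lift_inv _ _ Hx 1 0 t eq_refl) as [t' [? ?]]; subst. eauto.
  - apply bstep_var_inv in Hx; contradiction.
Qed.

Lemma commute1 : forall M P, bstep M P -> forall N, estep M N ->
  exists Q, star estep P Q /\ brefl_ N Q.
Proof.
  induction 1; intros N HN.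
  - apply estep_app_inv in HN. destruct HN as [[x [? Hx]]|[x [? Hx]]]; subst.
    + apply estep_lam_inv in Hx. destruct Hx as [[t1 [? ?]]|[a' [? Ha]]]; subst.
      * exists (App t1 u). split; [|left; auto]. simpl.
        rewrite (subst_lift t1 u 0 0 0) by lia. rewrite !lift_0. apply s_refl.
      * exists (subst 0 u a'). split. apply star_one, estep_subst; auto.
        right; constructor.
    + exists (subst 0 x t). split. apply estep_subst_arg; auto. right; constructor.
  - apply estep_app_inv in HN. destruct HN as [[x [? Hx]]|[x [? Hx]]]; subst.
    + destruct (IHbstep _ Hx) as [q [Hq1 Hq2]].
      exists (App q b). split.
      * apply (star_map estep estep (fun x => App x b)); [intros; constructor; auto|]. auto.
      * destruct Hq2; subst; [left; auto| right; constructor; auto].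
    + exists (App a' x). split. apply star_one; constructor; auto. right; constructor; auto.
  - apply estep_app_inv in HN. destruct HN as [[x [? Hx]]|[x [? Hx]]]; subst.
    + exists (App x b'). split. apply star_one; constructor; auto. right; constructor; auto.
    + destruct (IHbstep _ Hx) as [q [Hq1 Hq2]].
      exists (App a q). split.
      * apply (star_map estep estep (fun x => App a x)); [intros; constructor; auto|]. auto.
      * destruct Hq2; subst; [left; auto| right; constructor; auto].
  - apply estep_lam_inv in HN. destruct HN as [[t1 [? ?]]|[x [? Hx]]]; subst.
    + destruct (bstep_eta_body _ _ H) as [[t' [? ?]]|[a0 [? ?]]]; subst.
      * exists t'. split. apply star_one; constructor. right; auto.
      * exists (Lam a0). split. apply s_refl. left; auto.
    + destruct (IHbstep _ Hx) as [q [Hq1 Hq2]].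
      exists (Lam q). split.
      * apply (star_map estep estep Lam); [intros; constructor; auto|]. auto.
      * destruct Hq2; subst; [left; auto| right; constructor; auto].
Qed.

Lemma commute2 : forall M N, star estep M N -> forall P, bstep M P ->
  exists Q, star estep P Q /\ brefl_ N Q.
Proof.
  induction 1 as [|x y z H H1 IH]; intros P HP.
  - exists P; split; [apply s_refl| right; auto].
  - destruct (commute1 _ _ HP _ H) as [q1 [Hq1 [Hq2|Hq2]]]; subst.
    + exists z. split; [eapply star_trans; eauto| left; auto].
    + destruct (IH _ Hq2) as [q [? ?]]. exists q; split; auto. eapply star_trans; eauto.
Qed.

Lemma commute3 : forall M P, star bstep M P -> forall N, star estep M N ->
  exists Q, star estep P Q /\ star bstep N Q.
Proof.
  induction 1 as [|x y z H H1 IH]; intros N HN.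
  - exists N; split; auto. apply s_refl.
  - destruct (commute2 _ _ HN _ H) as [q1 [Hq1 Hq2]].
    destruct (IH _ Hq1) as [q [? ?]]. exists q; split; auto.
    destruct Hq2; subst; auto. eapply s_step; eauto.
Qed.

Definition X_ x y := star bstep x y \/ star estep x y.

Lemma X_diamond : diamond X_.
Proof.
  intros x y1 y2 [H1|H1] [H2|H2].
  - destruct (bstep_confluent _ _ _ H1 H2) as [z [? ?]]. exists z; split; left; auto.
  - destruct (commute3 _ _ H1 _ H2) as [z [? ?]]. exists z; split; [right|left]; auto.
  - destruct (commute3 _ _ H2 _ H1) as [z [? ?]]. exists z; split; [left|right]; auto.
  - destruct (estep_confluent _ _ _ H1 H2) as [z [? ?]]. exists z; split; right; auto.
Qed.

Lemma step_split : forall x y, step x y -> bstep x y \/ estep x y.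
Proof.
  induction 1; try (left; constructor; fail); try (right; constructor; fail);
  destruct IHstep; [left|right| left|right|left|right]; constructor; auto.
Qed.

Lemma bstep_step : forall x y, bstep x y -> step x y.
Proof. induction 1; constructor; auto. Qed.
Lemma estep_step : forall x y, estep x y -> step x y.
Proof. induction 1; constructor; auto. Qed.

Lemma step_confluent : confluent step.
Proof.
  intros x y1 y2 H1 H2.
  assert (C := diamond_confluent X_ X_diamond).
  assert (E1 : forall a b, star step a b -> star X_ a b).
  { apply star_mono. intros a b H. apply star_one. destruct (step_split _ _ H);
    [left|right]; apply star_one; auto. }
  assert (E2 : forall a b, star X_ a b -> star step a b).
  { apply star_mono. intros a b [H|H].
    - apply (star_mono bstep step); auto. intros; apply star_one, bstep_step; auto.
    - apply (star_mono estep step); auto. intros; apply star_one, estep_step; auto. }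
  destruct (C x y1 y2 (E1 _ _ H1) (E1 _ _ H2)) as [z [? ?]].
  exists z; split; apply E2; auto.
Qed.

Lemma conv_join : forall a b, conv a b -> exists c, star step a c /\ star step b c.
Proof.
  induction 1.
  - exists b; split; [apply star_one; auto| apply s_refl].
  - exists a; split; apply s_refl.
  - destruct IHconv as [c [? ?]]; eauto.
  - destruct IHconv1 as [c1 [? ?]]. destruct IHconv2 as [c2 [? ?]].
    destruct (step_confluent b c1 c2) as [d [? ?]]; auto.
    exists d; split; eapply star_trans; eauto.
Qed.
Lemma church_body_nostep : forall m x,
  step (Nat.iter m (fun t => App (Var 1) t) (Var 0)) x -> False.
Proof.
  induction m; intros x H; simpl in H; inversion H; subst; eauto.
  inversion H3.
Qed.

Lemma church_step : forall m x, step (church m) x -> m = 1 /\ x = Lam (Var 0).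
Proof.
  intros m x H. unfold church in H. inversion H; subst.
  inversion H1; subst.
  - destruct m as [|m]; simpl in H2; try discriminate.
    injection H2 as E1 E2. destruct m; simpl in E2; try discriminate.
    destruct (lift_var_inv _ _ _ _ E1) as [k [? Hk]]; subst.
    destruct k; simpl in Hk; [|lia]. auto.
  - exfalso; eapply church_body_nostep; eauto.
Qed.

Lemma id_nostep : forall x, step (Lam (Var 0)) x -> False.
Proof. intros x H; inversion H; subst. inversion H1. Qed.

Lemma church_steps : forall m x, star step (church m) x ->
  x = church m \/ (m = 1 /\ x = Lam (Var 0)).
Proof.
  intros m x H. remember (church m) as c eqn:Ec. revert Ec.
  induction H as [|x y z H H1 IH]; intros Ec; subst; auto.
  destruct (church_step _ _ H) as [? ?]; subst.
  inversion H1; subst; auto. exfalso; eapply id_nostep; eauto.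
Qed.

Lemma div2_dbl : forall n P, Nat.div2 (n + n + P) = n + Nat.div2 P.
Proof. induction n; intros; simpl; auto. rewrite Nat.add_succ_r. simpl. rewrite IHn. reflexivity. Qed.

Lemma div2_dbl0 : forall n, Nat.div2 (n + n) = n.
Proof. intros n. rewrite <- (Nat.add_0_r (n + n)). rewrite div2_dbl. simpl. lia. Qed.

Lemma halving : forall (T : Type) (a : nat -> T) (F : T -> T), (forall n, F (a n) = a (Nat.div2 n)) ->
  forall P, 0 < P -> forall N, (forall n, N <= n -> a n = a (n + P)) ->
  exists N', forall n, N' <= n -> a n = a (S n).
Proof.
  intros T a F HF P. induction P as [P IH] using (well_founded_induction lt_wf). intros HP N HN.
  destruct (Nat.eq_dec P 1) as [->|HP1].
  - exists N. intros n Hn. rewrite HN by auto. f_equal; lia.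
  - refine (IH (Nat.div2 P) _ _ N _).
    + apply Nat.lt_div2; lia.
    + destruct P as [|[|P]]; [lia|lia|]. simpl. apply Nat.lt_0_succ.
    + intros n Hn. transitivity (a (Nat.div2 (n + n))). rewrite div2_dbl0; reflexivity.
      rewrite <- HF. rewrite (HN (n + n)) by lia. rewrite HF. rewrite div2_dbl. reflexivity.
Qed.
Inductive tyT : list ty -> term -> ty -> Type :=
| tv : forall G n A, nth_error G n = Some A -> tyT G (Var n) A
| tl : forall G t A B, tyT (A :: G) t B -> tyT G (Lam t) (Arr A B)
| ta : forall G t u A B, tyT G t (Arr A B) -> tyT G u A -> tyT G (App t u) B.

Lemma has_tyT : forall G t A, has_type G t A -> inhabited (tyT G t A).
Proof.
  induction 1.
  - constructor; apply tv; auto.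
  - destruct IHhas_type; constructor; apply tl; auto.
  - destruct IHhas_type1, IHhas_type2; constructor; eapply ta; eauto.
Qed.

Definition ty_eq_dec : forall A B : ty, {A = B} + {A <> B}.
Proof. decide equality. Defined.

From mathcomp Require Import all_boot zify.
From Stdlib Require Import FunctionalExtensionality Eqdep_dec.

Fixpoint sem (A : ty) : finType :=
  match A with o => bool | Arr A B => {ffun sem A -> sem B} end.
Fixpoint dflt (A : ty) : sem A :=
  match A return sem A with o => false | Arr A B => [ffun _ => dflt B] end.

Definition env := forall A : ty, nat -> sem A.
Definition cast (A B : ty) (v : sem A) : sem B :=
  match ty_eq_dec A B with left e => eq_rect A sem v B e | right _ => dflt B end.
Lemma cast_id : forall A v, cast A A v = v.
Proof.
  intros A v. unfold cast. destruct (ty_eq_dec A A) as [e|n]; [|congruence].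
  rewrite (UIP_dec ty_eq_dec e (erefl A)). reflexivity.
Qed.

Definition ext (A : ty) (v : sem A) (r : env) : env :=
  fun B n => match n with 0 => cast A B v | S m => r B m end.

Fixpoint den G t A (d : tyT G t A) (r : env) {struct d} : sem A :=
  match d in tyT G t A return sem A with
  | tv _ n A _ => r A n
  | tl _ _ A B d' => [ffun v => den _ _ _ d' (ext A v r)]
  | ta _ _ _ A B d1 d2 => (den _ _ _ d1 r) (den _ _ _ d2 r)
  end.
Arguments den {G t A} d r.

Definition shiftE (c dd : nat) (r : env) : env :=
  fun B n => if Nat.ltb n c then r B n else r B (n + dd).
Definition insE (k : nat) U (v : sem U) (r : env) : env :=
  fun B n => if Nat.ltb n k then r B n else if Nat.eqb n k then cast U B v else r B (n - 1).
Definition dropE (k : nat) (r : env) : env := fun B n => r B (n + k).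

Lemma inv_app : forall G a b A (d : tyT G (App a b) A),
  exists U (d1 : tyT G a (Arr U A)) (d2 : tyT G b U), forall r, den d r = (den d1 r) (den d2 r).
Proof.
  intros G a b A d. remember (App a b) as M eqn:E. destruct d; try discriminate.
  injection E; intros; subst. exists A, d1, d2. reflexivity.
Qed.

Lemma inv_lam : forall G t A B (d : tyT G (Lam t) (Arr A B)),
  exists d' : tyT (A :: G) t B, forall r, den d r = [ffun v => den d' (ext A v r)].
Proof.
  assert (H : forall G M C (d : tyT G M C) t A B (e1 : M = Lam t) (e2 : C = Arr A B),
    exists d' : tyT (A :: G) t B, forall r, eq_rect C sem (den d r) (Arr A B) e2 = [ffun v => den d' (ext A v r)]).
  { intros G M C d. destruct d; intros; try discriminate.
    injection e1; intros; subst. injection e2; intros; subst.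
    rewrite (UIP_dec ty_eq_dec e2 (erefl _)). exists d. reflexivity. }
  intros G t A B d. apply (H G (Lam t) (Arr A B) d t A B (erefl _) (erefl _)).
Qed.

Lemma inv_var : forall G n A (d : tyT G (Var n) A),
  nth_error G n = Some A /\ forall r, den d r = r A n.
Proof.
  intros G n A d. remember (Var n) as M eqn:E. destruct d; try discriminate.
  injection E; intros; subst. split; auto.
Qed.
Lemma env_ext : forall r r' : env, (forall B n, r B n = r' B n) -> r = r'.
Proof.
  intros r r' H. apply functional_extensionality_dep; intro B.
  apply functional_extensionality; intro n. apply H.
Qed.

Lemma shift_ext : forall c dd A v r, shiftE (S c) dd (ext A v r) = ext A v (shiftE c dd r).
Proof. intros; apply env_ext; intros B n; destruct n; reflexivity. Qed.

Lemma weaken : forall G t A (d : tyT G t A) G1 G2 D, G = app G1 G2 ->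
  exists d' : tyT (app G1 (app D G2)) (Defs.lift (length D) (length G1) t) A,
    forall r, den d' r = den d (shiftE (length G1) (length D) r).
Proof.
  induction d as [G n A e|G t A B d IH|G t u A B d1 IH1 d2 IH2]; intros G1 G2 D HG; subst.
  - simpl. destruct (Nat.ltb_spec n (length G1)) as [Hn|Hn].
    + assert (e' : nth_error (app G1 (app D G2)) n = Some A).
      { rewrite (nth_error_app1 _ _ Hn). rewrite (nth_error_app1 _ _ Hn) in e. exact e. }
      exists (tv _ _ _ e'). intros r. simpl. unfold shiftE.
      destruct (Nat.ltb_spec n (length G1)); [reflexivity| lia].
    + assert (e' : nth_error (app G1 (app D G2)) (n + length D) = Some A).
      { rewrite (nth_error_app2 _ _ (ltac:(lia) : (length G1 <= n + length D)%coq_nat)).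
        rewrite (nth_error_app2 _ _ (ltac:(lia) : (length D <= n + length D - length G1)%coq_nat)).
        rewrite (nth_error_app2 _ _ Hn) in e.
        replace (n + length D - length G1 - length D)%coq_nat with (n - length G1)%coq_nat by lia. exact e. }
      exists (tv _ _ _ e'). intros r. simpl. unfold shiftE.
      destruct (Nat.ltb_spec n (length G1)); [lia| reflexivity].
  - destruct (IH (A :: G1) G2 D (erefl _)) as [d' Hd'].
    exists (tl _ _ _ _ d'). intros r. simpl. apply/ffunP => v. rewrite !ffunE.
    rewrite Hd'. simpl. rewrite shift_ext. reflexivity.
  - destruct (IH1 G1 G2 D (erefl _)) as [d1' H1]. destruct (IH2 G1 G2 D (erefl _)) as [d2' H2].
    exists (ta _ _ _ _ _ d1' d2'). intros r. simpl. rewrite H1 H2. reflexivity.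
Qed.

Lemma strengthen : forall G M B (d : tyT G M B) G1 X G2 t, G = app G1 (X :: G2) ->
  M = Defs.lift 1 (length G1) t ->
  exists d' : tyT (app G1 G2) t B, forall r, den d r = den d' (shiftE (length G1) 1 r).
Proof.
  induction d as [G n A e|G a A B d IH|G a b A B d1 IH1 d2 IH2]; intros G1 X G2 t HG HM; subst.
  - destruct (lift_var_inv _ _ _ _ (esym HM)) as [m [? Hm]]; subst.
    destruct (Nat.ltb_spec m (length G1)) as [Hlt|Hge]; subst.
    + assert (e' : nth_error (app G1 G2) m = Some A).
      { rewrite (nth_error_app1 _ _ Hlt). rewrite (nth_error_app1 _ _ Hlt) in e. exact e. }
      exists (tv _ _ _ e'). intros r. simpl. unfold shiftE.
      destruct (Nat.ltb_spec m (length G1)); [reflexivity| lia].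
    + assert (e' : nth_error (app G1 G2) m = Some A).
      { rewrite (nth_error_app2 _ _ Hge).
        rewrite (nth_error_app2 _ _ (ltac:(lia) : (length G1 <= m + 1)%coq_nat)) in e.
        replace (m + 1 - length G1)%coq_nat with (S (m - length G1)%coq_nat) in e by lia. exact e. }
      exists (tv _ _ _ e'). intros r. simpl. unfold shiftE.
      destruct (Nat.ltb_spec m (length G1)); [lia| reflexivity].
  - destruct (lift_lam_inv _ _ _ _ (esym HM)) as [a0 [? Ha]]; subst.
    destruct (IH (A :: G1) X G2 a0 (erefl _) (erefl _)) as [d' Hd'].
    exists (tl _ _ _ _ d'). intros r. simpl. apply/ffunP => v. rewrite !ffunE.
    rewrite Hd'. simpl. rewrite shift_ext. reflexivity.
  - destruct (lift_app_inv _ _ _ _ _ (esym HM)) as [a0 [b0 [? [Ha Hb]]]]; subst.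
    destruct (IH1 G1 X G2 a0 (erefl _) (erefl _)) as [d1' H1].
    destruct (IH2 G1 X G2 b0 (erefl _) (erefl _)) as [d2' H2].
    exists (ta _ _ _ _ _ d1' d2'). intros r. simpl. rewrite H1 H2. reflexivity.
Qed.

Lemma drop_ext : forall k A v r, dropE (S k) (ext A v r) = dropE k r.
Proof. intros; apply env_ext; intros B n. unfold dropE. rewrite addnS. reflexivity. Qed.

Lemma ins_ext : forall k U w A v r, insE (S k) U w (ext A v r) = ext A v (insE k U w r).
Proof.
  intros; apply env_ext; intros B n. destruct n as [|n]; [reflexivity|].
  unfold insE. rewrite !subn1 /=.
  repeat match goal with
   | |- context [?a <? ?b] => destruct (Nat.ltb_spec a b)
   | |- context [?a =? ?b] => destruct (Nat.eqb_spec a b) end; try lia; try reflexivity.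
  destruct n; [lia|]. rewrite subn1. reflexivity.
Qed.

Lemma subst_ty : forall G t A (d : tyT G t A) G1 U G2 u (du : tyT G2 u U), G = app G1 (U :: G2) ->
  exists d' : tyT (app G1 G2) (Defs.subst (length G1) u t) A,
    forall r, den d' r = den d (insE (length G1) U (den du (dropE (length G1) r)) r).
Proof.
  induction d as [G n A e|G t A B d IH|G t u0 A B d1 IH1 d2 IH2]; intros G1 U G2 u du HG; subst.
  - simpl. destruct (Nat.eqb_spec n (length G1)) as [Heq|Hne].
    + subst n. rewrite (nth_error_app2 _ _ (le_n _)) Nat.sub_diag in e. simpl in e.
      injection e; intros; subst A.
      destruct (weaken _ _ _ du nil G2 G1 (erefl _)) as [d' Hd'].
      exists d'. intros r. rewrite Hd'. simpl. unfold insE.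
      destruct (Nat.ltb_spec (length G1) (length G1)); [lia|].
      rewrite Nat.eqb_refl cast_id. reflexivity.
    + destruct (Nat.ltb_spec (length G1) n) as [Hlt|Hge].
      * assert (e' : nth_error (app G1 G2) (n - 1) = Some A).
        { rewrite (nth_error_app2 _ _ (ltac:(lia) : (length G1 <= n - 1)%coq_nat)).
          rewrite (nth_error_app2 _ _ (ltac:(lia) : (length G1 <= n)%coq_nat)) in e.
          replace (n - length G1)%coq_nat with (S (n - 1 - length G1)%coq_nat) in e by lia. exact e. }
        exists (tv _ _ _ e'). intros r. simpl. unfold insE.
        destruct (Nat.ltb_spec n (length G1)); [lia|].
        destruct (Nat.eqb_spec n (length G1)); [lia|]. reflexivity.
      * assert (Hlt : (n < length G1)%coq_nat) by lia.
        assert (e' : nth_error (app G1 G2) n = Some A).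
        { rewrite (nth_error_app1 _ _ Hlt). rewrite (nth_error_app1 _ _ Hlt) in e. exact e. }
        exists (tv _ _ _ e'). intros r. simpl. unfold insE.
        destruct (Nat.ltb_spec n (length G1)); [reflexivity|lia].
  - destruct (IH (A :: G1) U G2 u du (erefl _)) as [d' Hd'].
    exists (tl _ _ _ _ d'). intros r. simpl. apply/ffunP => v. rewrite !ffunE.
    rewrite Hd'. simpl. rewrite drop_ext ins_ext. reflexivity.
  - destruct (IH1 G1 U G2 u du (erefl _)) as [d1' H1]. destruct (IH2 G1 U G2 u du (erefl _)) as [d2' H2].
    exists (ta _ _ _ _ _ d1' d2'). intros r. simpl. rewrite H1 H2. reflexivity.
Qed.
Lemma ins0_ext : forall U v r, insE 0 U v r = ext U v r.
Proof.
  intros; apply env_ext; intros B n. destruct n as [|n]; [reflexivity|].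
  unfold insE. simpl. rewrite subn1. reflexivity.
Qed.

Lemma drop0 : forall r, dropE 0 r = r.
Proof. intros; apply env_ext; intros B n. unfold dropE. rewrite addn0. reflexivity. Qed.

Lemma shift01_ext : forall A v r, shiftE 0 1 (ext A v r) = r.
Proof. intros; apply env_ext; intros B n. unfold shiftE. simpl. rewrite addn1. reflexivity. Qed.

Lemma subject_red : forall M N, step M N -> forall G A (d : tyT G M A),
  exists d' : tyT G N A, forall r, den d r = den d' r.
Proof.
  induction 1 as [t u|t|a a' b H IH|a b b' H IH|a a' H IH]; intros G C d.
  - destruct (inv_app _ _ _ _ d) as [U [d1 [d2 Hd]]].
    destruct (inv_lam _ _ _ _ d1) as [d1' Hd1].
    destruct (subst_ty _ _ _ d1' nil U G u d2 (erefl _)) as [d' Hd'].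
    exists d'. intros r. rewrite Hd Hd1 ffunE Hd'. simpl. rewrite drop0 ins0_ext. reflexivity.
  - remember (Lam (App (Defs.lift 1 0 t) (Var 0))) as M eqn:E. destruct d; try discriminate.
    injection E; intros; subst.
    destruct (inv_app _ _ _ _ d) as [U [d1 [d2 Hd]]].
    destruct (inv_var _ _ _ d2) as [e2 Hd2]. simpl in e2. injection e2; intros; subst U.
    destruct (strengthen _ _ _ d1 nil A G t (erefl _) (erefl _)) as [d1' Hd1].
    exists d1'. intros r. simpl. apply/ffunP => v. rewrite ffunE Hd Hd1 Hd2. simpl.
    rewrite shift01_ext cast_id. reflexivity.
  - destruct (inv_app _ _ _ _ d) as [U [d1 [d2 Hd]]].
    destruct (IH _ _ d1) as [d1' H1].
    exists (ta _ _ _ _ _ d1' d2). intros r. rewrite Hd H1. reflexivity.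
  - destruct (inv_app _ _ _ _ d) as [U [d1 [d2 Hd]]].
    destruct (IH _ _ d2) as [d2' H2].
    exists (ta _ _ _ _ _ d1 d2'). intros r. rewrite Hd H2. reflexivity.
  - remember (Lam a) as M eqn:E. destruct d; try discriminate.
    injection E; intros; subst.
    destruct (IH _ _ d) as [d' Hd'].
    exists (tl _ _ _ _ d'). intros r. simpl. apply/ffunP => v. rewrite !ffunE Hd'. reflexivity.
Qed.

Lemma subject_reds : forall M N, star step M N -> forall G A (d : tyT G M A),
  exists d' : tyT G N A, forall r, den d r = den d' r.
Proof.
  induction 1 as [x|x y z H H1 IH]; intros G A d.
  - exists d; auto.
  - destruct (subject_red _ _ H _ _ d) as [d1 Hd1].
    destruct (IH _ _ d1) as [d2 Hd2]. exists d2. intros r. rewrite Hd1 Hd2. reflexivity.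
Qed.

Definition achurch (tau : ty) (m : nat) : sem (omega tau) :=
  [ffun f : sem (Arr tau tau) => [ffun x : sem tau => Nat.iter m (fun y => f y) x]].

Lemma iter_den : forall m G tau
  (d : tyT (tau :: Arr tau tau :: G) (Nat.iter m (fun t => App (Var 1) t) (Var 0)) tau) r,
  den d r = Nat.iter m (fun y => (r (Arr tau tau) 1 : sem (Arr tau tau)) y) (r tau 0).
Proof.
  induction m as [|m IH]; intros G tau d r.
  - destruct (inv_var _ _ _ d) as [_ H]. apply H.
  - destruct (inv_app _ _ _ _ d) as [U [d1 [d2 Hd]]].
    destruct (inv_var _ _ _ d1) as [e1 Hd1]. simpl in e1. injection e1; intros; subst U.
    rewrite Hd Hd1 (IH _ _ d2). reflexivity.
Qed.

Lemma church_den : forall m G tau (d : tyT G (church m) (omega tau)) r,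
  den d r = achurch tau m.
Proof.
  intros m G tau d r.
  destruct (inv_lam _ _ (Arr tau tau) (Arr tau tau) d) as [d1 Hd1].
  destruct (inv_lam _ _ _ _ d1) as [d2 Hd2].
  rewrite Hd1. apply/ffunP => f. rewrite !ffunE Hd2. apply/ffunP => x. rewrite !ffunE.
  rewrite iter_den. simpl. rewrite !cast_id. reflexivity.
Qed.

Lemma id_den : forall G tau (d : tyT G (Lam (Var 0)) (omega tau)) r,
  den d r = achurch tau 1.
Proof.
  intros G tau d r.
  destruct (inv_lam _ _ (Arr tau tau) (Arr tau tau) d) as [d1 Hd1].
  destruct (inv_var _ _ _ d1) as [_ H1].
  rewrite Hd1. apply/ffunP => f. rewrite !ffunE H1. simpl. rewrite cast_id.
  apply/ffunP => x. rewrite ffunE. reflexivity.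
Qed.

Fixpoint body_der tau G m : tyT (tau :: Arr tau tau :: G) (Nat.iter m (fun t => App (Var 1) t) (Var 0)) tau :=
  match m return tyT (tau :: Arr tau tau :: G) (Nat.iter m (fun t => App (Var 1) t) (Var 0)) tau with
  | 0 => tv (tau :: Arr tau tau :: G) 0 tau (erefl _)
  | S m' => ta _ _ _ tau tau (tv (tau :: Arr tau tau :: G) 1 (Arr tau tau) (erefl _)) (body_der tau G m')
  end.

Definition church_der tau G m : tyT G (church m) (omega tau) :=
  tl _ _ _ _ (tl _ _ _ _ (body_der tau G m)).
Definition succ_sem tau (c : sem (omega tau)) : sem (omega tau) :=
  [ffun f : sem (Arr tau tau) => [ffun x : sem tau => f ((c f : sem (Arr tau tau)) x)]].

Lemma a_succ : forall tau n, achurch tau (S n) = succ_sem tau (achurch tau n).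
Proof.
  intros tau n. apply/ffunP => f. rewrite !ffunE. apply/ffunP => x. rewrite !ffunE. reflexivity.
Qed.

Fixpoint neg (A : ty) : sem A -> sem A :=
  match A return sem A -> sem A with
  | o => negb
  | Arr A B => fun g => [ffun v => neg B ((g : sem (Arr A B)) v)]
  end.

Lemma neg_neq : forall A x, neg A x <> x.
Proof.
  induction A as [|A1 IH1 A2 IH2]; intros x H.
  - destruct x; discriminate.
  - apply (IH2 (x (dflt A1))). have := congr1 (fun g : sem (Arr A1 A2) => g (dflt A1)) H.
    simpl. rewrite ffunE. auto.
Qed.

Lemma a_neq : forall tau n, achurch tau n <> achurch tau (S n).
Proof.
  intros tau n H.
  have := congr1 (fun c : sem (omega tau) => ((c [ffun x => neg tau x]) : sem (Arr tau tau)) (dflt tau)) H.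
  rewrite /achurch !ffunE /=. rewrite ffunE. intro H'. symmetry in H'. revert H'. apply neg_neq.
Qed.

From Stdlib Require Import List.

Theorem proposition3 :
  ~ strictly_definable 1 (fun ns => Nat.div2 (hd 0 ns)).
Proof.
  intros [tau [E [HE Hc]]].
  destruct (has_tyT _ _ _ HE) as [dE].
  pose r0 : env := fun A _ => dflt A.
  pose F := fun c : sem (omega tau) => (den dE r0 : sem (Arr (omega tau) (omega tau))) c.
  have HF : forall n, F (achurch tau n) = achurch tau (Nat.div2 n).
  { intros n. have Hn := Hc [n] (erefl _).
    change (conv (App E (church n)) (church (Nat.div2 n))) in Hn.
    destruct (conv_join _ _ Hn) as [Q [H1 H2]].
    destruct (subject_reds _ _ H1 _ _ (ta _ _ _ _ _ dE (church_der tau nil n))) as [dQ HQ].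
    have E0 : F (achurch tau n) = den dQ r0.
    { rewrite -HQ /F -(church_den n nil tau (church_der tau nil n) r0). reflexivity. }
    rewrite E0.
    destruct (church_steps _ _ H2) as [->|[E1 ->]].
    - apply church_den.
    - rewrite E1. apply id_den. }
  pose a := achurch tau.
  have key : forall i j, (i < j)%coq_nat -> a i = a j -> False.
  { intros i j Hij Haij.
    have Hper : forall t, a (Nat.add i t) = a (Nat.add j t).
    { induction t as [|t IH]. rewrite !Nat.add_0_r. exact Haij.
      rewrite !Nat.add_succ_r /a !a_succ. rewrite -/a IH. reflexivity. }
    destruct (halving _ a F HF (j - i)%coq_nat ltac:(lia) i) as [N' HN'].
    - intros n Hn. have := Hper (n - i)%coq_nat.
      replace (Nat.add i (n - i)%coq_nat) with n by lia.
      replace (Nat.add j (n - i)%coq_nat) with (n + (j - i))%coq_nat by lia. auto.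
    - apply (a_neq tau N'). apply HN'. lia. }
  pose g := fun i : 'I_(#|sem (omega tau)|.+1) => a (nat_of_ord i).
  case Hb: (injectiveb g).
  - move/injectiveP: Hb => Hinj. have := leq_card g Hinj. rewrite card_ord ltnn. discriminate.
  - have : ~~ injectiveb g by rewrite Hb.
    move/injectivePn => [i [j Hij Heq]].
    rewrite /g in Heq.
    have Hne : nat_of_ord i <> nat_of_ord j.
    { intro E2. move/eqP: Hij. apply. apply val_inj. exact E2. }
    destruct (Nat.lt_total i j) as [Hl|[Hl|Hl]].
    + exact (key _ _ Hl Heq).
    + exact (Hne Hl).
    + exact (key _ _ Hl (esym Heq)).
Qed.
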